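(* Fix $b\in\mathbb{Z}^{V_+}_{\ge 0}$. For every $\bar x\in\mathcal{X}$ define $$\mathrm{SRI}(\bar x)=\Big\{y\in[\mathbf 0,b]^N:\ y^\xi(S)\ge k_\xi(S)+\bar x(E(S))-|S|\ \ \forall\,\emptyset\ne S\subseteq V_+,\ \forall \xi\in[N]\Big\}.$$ Then $\mathrm{SRI}(\bar x)=\operatorname{conv}\big(\Pi(\bar x)\cap[\mathbf 0,b]^N\big)$ for every $\bar x\in\mathcal{X}\cap\mathbb{Z}^E$.
   Context: $G=(V,E)$ is a complete undirected graph with $V=\{0\}\cup V_+$ ($0$ is the depot, $V_+$ the customers); $D=(V,A)$ replaces each edge by two opposite arcs. $C\in\mathbb{Q}_{>0}$ is the capacity. Scenarios $\xi\in[N]$ have demand vectors $d^\xi\in\mathbb{Q}^{V_+}_{\ge0}$ and probabilities $p_\xi\ge0$, $\sum_\xi p_\xi=1$; assume $d^\xi(v)\le C$ for all $\xi,v$. $f(S)=\sum_{i\in S}f(i)$; $k_\xi(S)=\lceil d^\xi(S)/C\rceil$; $\bar d=\sum_\xi p_\xi d^\xi$. For $S\subseteq V$, $\delta(S)$ is the set of edges with exactly one endpoint in $S$ and $E(S)$ the set of edges with both endpoints in $S$. $\mathcal{X}$ is one of the polytopes $\mathcal{X}_{\mathrm{sub}}=\{x\in[0,2]^E: x(\delta(v))=2\ \forall v\in V_+,\ x(E(S))\le|S|-1\ \forall\emptyset\ne S\subseteq V_+\}$ or $\mathcal{X}_{\mathrm{cvrp}}=\mathcal{X}_{\mathrm{sub}}\cap\{x: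 x(\delta(0))=2k,\ x(E(S))\le |S|-\lceil \bar d(S)/C\rceil\ \forall \emptyset\ne S\subseteq V_+\}$ for a given positive integer $k$. A route $R=(v_1,\dots,v_\ell)$ is the cycle $0,v_1,\dots,v_\ell,0$ through distinct customers, $V_+(R)=\{v_1,\dots,v_\ell\}$, $v_0=v_{\ell+1}=0$. Each $x\in\mathcal{X}\cap\mathbb{Z}^E$ is a routing plan; $\mathcal{R}(x)$ is the collection of routes it encodes (a value $2$ on edge $\{0,v\}$ encodes the route $(v)$), whose customer sets partition $V_+$. Vectors $y\in\mathbb{R}^{[N]\times V_+}$ have entries $y^\xi_v$, $y^\xi$ is the scenario-$\xi$ restriction. For a route $R=(v_1,\dots,v_\ell)$ and $\xi$, $\mathcal{Y}^\xi(R)$ is the set of $y^\xi\in\mathbb{Z}^{V_+}_{\ge0}$ for which there exist $f\in\mathbb{R}^A_{\ge0}$, $g\in\mathbb{R}^{V_+}_{\ge0}$ with $f_{(v_{i-1},v_i)}+d^\xi(v_i)=f_{(v_i,v_{i+1})}+g_{v_i}$ ($i\in[\ell]$), $f_{(v_{i-1},v_i)}\le C$ ($i\in[\ell+1]$), $g_{v_i}\le C y^\xi_{v_i}$ ($i\in[\ell]$). $\Pi(R)=\mathcal{Y}^1(R)\times\cdots\times\mathcal{Y}^N(R)$, and $\Pi(x)=\bigcap_{R\in\mathcal{R}(x)}\Pi(R)$ for $x\in\mathcal{X}\cap\mathbb{Z}^E$. $[\mathbf 0,b]^N=\{y\in\mathbb{R}^{[N]\times V_+}:0\le y^\xi_v\le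 b_v\ \forall\xi,v\}$. *)

(* Defs.v *)
From HB Require Import structures.
From mathcomp Require Import all_boot all_order all_algebra.
From mathcomp Require Import reals.
Set Implicit Arguments. Unset Strict Implicit. Unset Printing Implicit Defensive.
Import Order.TTheory GRing.Theory Num.Theory.
Local Open Scope ring_scope.

(* Customers are 'I_n; vertices are option 'I_n with None = depot 0 and
   Some v = customer v.
   Edges of the complete graph G are the 2-element subsets of vertices;
   an edge vector x is a function {set option 'I_n} -> R (only its values on
   edges matter). *)

Section Defs.
Variables (R : realType) (n N : nat).

Definition vertex := option 'I_n.
Definition is_edge (e : {set vertex}) : bool := #|e| == 2%N.

Definition x_delta_cust (x : {set vertex} -> R) (v : 'I_n) : R :=
  \sum_(e : {set vertex} | is_edge e && (Some v \in e)) x e.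
Definition x_delta_depot (x : {set vertex} -> R) : R :=
  \sum_(e : {set vertex} | is_edge e && (None \in e)) x e.
Definition x_E (x : {set vertex} -> R) (S : {set 'I_n}) : R :=
  \sum_(e : {set vertex} | is_edge e && (e \subset (@Some _) @: S)) x e.

Definition in_X_sub (x : {set vertex} -> R) : Prop :=
  [/\ forall e, is_edge e -> 0 <= x e <= 2,
      forall v : 'I_n, x_delta_cust x v = 2 &
      forall S : {set 'I_n}, S != set0 -> x_E x S <= (#|S|%:R - 1)].

Definition ceilR (q : rat) : R := (Num.ceil q)%:~R.

Definition kS (C : rat) (d : 'I_N -> 'I_n -> rat) (xi : 'I_N) (S : {set 'I_n}) : R :=
  ceilR ((\sum_(v in S) d xi v) / C).

Definition dbar (p : 'I_N -> rat) (d : 'I_N -> 'I_n -> rat) (v : 'I_n) : rat :=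
  \sum_(xi < N) p xi * d xi v.

Definition in_X_cvrp (C : rat) (d : 'I_N -> 'I_n -> rat) (p : 'I_N -> rat) (k : nat)
  (x : {set vertex} -> R) : Prop :=
  [/\ in_X_sub x,
      x_delta_depot x = 2 * k%:R &
      forall S : {set 'I_n}, S != set0 ->
        x_E x S <= #|S|%:R - ceilR ((\sum_(v in S) dbar p d v) / C)].

Inductive Xchoice := Xsub | Xcvrp of nat.

Definition in_X (C : rat) (d : 'I_N -> 'I_n -> rat) (p : 'I_N -> rat) (ch : Xchoice)
  (x : {set vertex} -> R) : Prop :=
  match ch with
  | Xsub => in_X_sub x
  | Xcvrp k => in_X_cvrp C d p k x
  end.

Definition is_intR (r : R) : Prop := exists z : int, r = z%:~R.

Definition integral_on_edges (x : {set vertex} -> R) : Prop :=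
  forall e, is_edge e -> is_intR (x e).

(* A route (v_1,...,v_l) is a sequence of customers; v_0 = v_{l+1} = depot *)
Definition route := seq 'I_n.

Definition rv (r : route) (i : nat) : vertex :=
  nth None (None :: map (@Some _) r) i.

Definition route_edge_count (r : route) (e : {set vertex}) : nat :=
  \sum_(i < (size r).+1) ([set rv r i; rv r i.+1] == e : nat).

Definition encodes (x : {set vertex} -> R) (Rs : seq route) : Prop :=
  [/\ all (fun r => (0 < size r)%N) Rs,
      uniq (flatten Rs),
      forall v : 'I_n, v \in flatten Rs &
      forall e, is_edge e -> x e = (\sum_(r <- Rs) route_edge_count r e)%:R].

Definition in_Y (C : rat) (d : 'I_N -> 'I_n -> rat) (xi : 'I_N) (r : route)
  (yxi : 'I_n -> R) : Prop :=
  (forall v, is_intR (yxi v) /\ 0 <= yxi v) /\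
  exists (f : vertex -> vertex -> R) (g : 'I_n -> R),
    [/\ forall u w, 0 <= f u w,
        forall v, 0 <= g v,
        forall i, (1 <= i <= size r)%N -> forall v, rv r i = Some v ->
           f (rv r i.-1) (rv r i) + ratr (d xi v) = f (rv r i) (rv r i.+1) + g v,
        forall i, (1 <= i <= (size r).+1)%N -> f (rv r i.-1) (rv r i) <= ratr C &
        forall i, (1 <= i <= size r)%N -> forall v, rv r i = Some v ->
           g v <= ratr C * yxi v].

Definition in_Pi_route C d (r : route) (y : 'I_N -> 'I_n -> R) : Prop :=
  forall xi, in_Y C d xi r (y xi).

Definition in_Pi C d (x : {set vertex} -> R) (y : 'I_N -> 'I_n -> R) : Prop :=
  forall Rs, encodes x Rs -> forall r, r \in Rs -> in_Pi_route C d r y.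

Definition in_box (b : 'I_n -> nat) (y : 'I_N -> 'I_n -> R) : Prop :=
  forall xi v, 0 <= y xi v <= (b v)%:R.

Definition in_SRI C d (b : 'I_n -> nat) (x : {set vertex} -> R)
  (y : 'I_N -> 'I_n -> R) : Prop :=
  in_box b y /\
  forall (S : {set 'I_n}) (xi : 'I_N), S != set0 ->
    \sum_(v in S) y xi v >= kS C d xi S + x_E x S - #|S|%:R.

Definition conv (P : ('I_N -> 'I_n -> R) -> Prop) (y : 'I_N -> 'I_n -> R) : Prop :=
  exists (m : nat) (lam : 'I_m -> R) (pts : 'I_m -> 'I_N -> 'I_n -> R),
    [/\ forall j, 0 <= lam j /\ P (pts j),
        \sum_(j < m) lam j = 1 &
        forall xi v, y xi v = \sum_(j < m) lam j * pts j xi v].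

End Defs.

(* Main.v *)
Require Import Defs.
From HB Require Import structures.
From mathcomp Require Import all_boot all_order all_algebra.
From mathcomp Require Import reals.
From mathcomp Require Import zify ring lra.
Import Order.TTheory GRing.Theory Num.Theory.
Set Implicit Arguments. Unset Strict Implicit. Unset Printing Implicit Defensive.

Section Comb.
Variable n : nat.
Notation V := (vertex n).

Definition pathv (r : seq 'I_n) : seq V := None :: map Some r ++ [:: None].

Fixpoint pcg (P : {set V} -> bool) (p : seq V) : nat :=
  match p with
  | a :: q => if q is b :: _ then P [set a; b] + pcg P q else 0
  | [::] => 0
  end.

Lemma rv_nth (r : route n) i : rv r i = nth None (pathv r) i.
Proof.
rewrite /rv /pathv -cat_cons nth_cat /=; case: ifP => // /negbT; rewrite -leqNgt => H.
by rewrite nth_default //; case: (i - _)%N => [|k] //=; rewrite nth_nil.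
Qed.

Lemma pcg_cons2 P a b q : pcg P (a :: b :: q) = P [set a; b] + pcg P (b :: q).
Proof. by []. Qed.

Lemma pcg_nth P a q : pcg P (a :: q) =
  \sum_(i < size q) P [set nth None (a :: q) i; nth None (a :: q) i.+1].
Proof.
elim: q a => [|b q IH] a; first by rewrite big_ord0.
by rewrite pcg_cons2 big_ord_recl IH.
Qed.

Lemma cnt_pcg (r : route n) e :
  route_edge_count r e = pcg (fun s => s == e) (pathv r).
Proof.
rewrite /route_edge_count /pathv pcg_nth size_cat size_map addn1.
by apply: eq_bigr => i _; rewrite -!/(pathv r) -!rv_nth.
Qed.

Lemma pcg_cat P a p b q : pcg P ((a :: p) ++ (b :: q)) =
  pcg P (a :: p) + P [set last a p; b] + pcg P (b :: q).
Proof.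
elim: p a => [|c p IH] a; first by rewrite /= add0n.
rewrite cat_cons.
have -> : pcg P (a :: (c :: p) ++ b :: q) = P [set a; c] + pcg P ((c :: p) ++ b :: q) by [].
by rewrite IH pcg_cons2 /= !addnA.
Qed.

Lemma setC2 (x y : V) : [set x; y] = [set y; x].
Proof. by rewrite setUC. Qed.

Lemma pcg_rcons P s a : pcg P (rcons s a) =
  pcg P s + (if s is [::] then 0 else P [set last None s; a]).
Proof.
case: s => [|c s]; first by [].
by rewrite -cats1 pcg_cat /= addn0.
Qed.

Lemma last_rev_cons (b : V) p : last None (rev (b :: p)) = b.
Proof.
by rewrite rev_cons last_rcons.
Qed.

Lemma pcg_rev P p : pcg P (rev p) = pcg P p.
Proof.
elim: p => [|a p IH] //; case: p IH => [|b p] IH //.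
rewrite rev_cons pcg_rcons IH pcg_cons2 last_rev_cons.
rewrite rev_cons; case: (rev p) => [|c s] /=; by rewrite addnC setC2.
Qed.


Lemma pathv_rev r : pathv (rev r) = rev (pathv r).
Proof. by rewrite /pathv rev_cons rev_cat /= map_rev cats1. Qed.

Lemma pcg_merge P a0 a b0 b :
  pcg P (pathv ((a0 :: a) ++ (b0 :: b))) + P [set Some (last a0 a); None] +
  P [set None; Some b0] =
  pcg P (pathv (a0 :: a)) + pcg P (pathv (b0 :: b)) + P [set Some (last a0 a); Some b0].
Proof.
have E1 : pathv ((a0 :: a) ++ (b0 :: b)) =
  (None :: Some a0 :: map Some a) ++ (Some b0 :: map Some b ++ [:: None]).
  by rewrite /pathv map_cat /= -?catA.
have E2 : pathv (a0 :: a) = (None :: Some a0 :: map Some a) ++ [:: None].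
  by rewrite /pathv /= -?catA.
have E3 : pathv (b0 :: b) = [:: None] ++ (Some b0 :: map Some b ++ [:: None]).
  by [].
have L : last (Some a0) (map Some a) = Some (last a0 a) by rewrite last_map.
rewrite E1 E2 E3 !pcg_cat /= L.
rewrite !addn0 !add0n; lia.
Qed.

Lemma eq_de1 (a u : 'I_n) :
  ([set None; Some a] == [set None; Some u] :> {set V}) = (a == u).
Proof.
apply/eqP/eqP => [H|->] //.
have : Some a \in [set None; Some u] by rewrite -H !inE eqxx orbT.
by rewrite !inE /= => /eqP [].
Qed.

Lemma eq_de2 (a c u : 'I_n) :
  ([set Some a; Some c] == [set None; Some u] :> {set V}) = false.
Proof.
apply/negbTE/eqP => H.
have : (None : V) \in [set Some a; Some c] by rewrite H !inE eqxx.
by rewrite !inE.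
Qed.

Lemma pcg_depot_inner u a s :
  pcg (fun e => e == [set None; Some u]) (Some a :: map Some s ++ [:: None]) =
  (last a s == u).
Proof.
elim: s a => [|c s IH] a /=; first by rewrite setC2 eq_de1 addn0.
by rewrite eq_de2 add0n -IH.
Qed.

Lemma pcg_depot u a s :
  pcg (fun e => e == [set None; Some u]) (pathv (a :: s)) = (a == u) + (last a s == u).
Proof.
by rewrite /pathv /= eq_de1 -pcg_depot_inner.
Qed.

Fixpoint pairs (S : {set 'I_n}) (r : seq 'I_n) : nat :=
  match r with
  | a :: q => if q is b :: _ then ((a \in S) && (b \in S)) + pairs S q else 0
  | [::] => 0
  end.

Lemma pairs_cons2 (S : {set 'I_n}) a b q : pairs S (a :: b :: q) = ((a \in S) && (b \in S)) + pairs S (b :: q).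
Proof. by []. Qed.

Lemma is_edge_SS (a b : 'I_n) : is_edge ([set Some a; Some b] : {set V}) = (a != b).
Proof.
rewrite /is_edge cards2 (inj_eq (@Some_inj _)).
by case: (a != b).
Qed.

Lemma sub_SS (S : {set 'I_n}) (a b : 'I_n) :
  ([set Some a; Some b] \subset (@Some _) @: S) = (a \in S) && (b \in S).
Proof. by rewrite subUset !sub1set !mem_imset //; apply: Some_inj. Qed.

Lemma sub_N (S : {set 'I_n}) (x : V) :
  ([set None; x] \subset (@Some _) @: S) = false.
Proof.
rewrite subUset sub1set; apply/negbTE; apply/negP => /andP[H _].
by case/imsetP: H.
Qed.

Lemma pcg_edgeS (S : {set 'I_n}) r : uniq r ->
  pcg (fun e => is_edge e && (e \subset (@Some _) @: S)) (pathv r) = pairs S r.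
Proof.
case: r => [|a s] /=.
  by rewrite sub_N andbF.
rewrite sub_N andbF add0n.
elim: s a => [|c s IH] a /=.
  by rewrite setC2 sub_N andbF.
move=> /andP[]; rewrite inE negb_or => /andP[ac _] us.
by rewrite -IH // is_edge_SS ac sub_SS.
Qed.

Lemma sum_eq1 (T : finType) (Q : pred T) (s : T) :
  (\sum_(e | Q e) (s == e : nat))%N = Q s.
Proof.
rewrite big_mkcond (bigD1 s) //= big1 => [|e /negbTE]; first by rewrite eqxx addn0; case: (Q s).
by rewrite eq_sym => ->; case: (Q e).
Qed.

Lemma sum_pcg (Q : pred {set V}) p :
  (\sum_(e | Q e) pcg (fun s => s == e) p)%N = pcg Q p.
Proof.
elim: p => [|a p IH]; first by rewrite big1.
case: p IH => [|b p] IH; first by rewrite big1.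
by rewrite pcg_cons2 -IH -sum_eq1 -big_split.
Qed.

Lemma pairs_catge (S : {set 'I_n}) a b : pairs S a + pairs S b <= pairs S (a ++ b).
Proof.
elim: a => [|x a IH] //=.
case: a IH => [|y a] IH /=.
  by case: b {IH} => [|z b] //=; rewrite leq_addl.
by rewrite -addnA leq_add2l.
Qed.

Lemma pairs_cat (S : {set 'I_n}) x a y b : pairs S ((x :: a) ++ (y :: b)) =
  pairs S (x :: a) + ((last x a \in S) && (y \in S)) + pairs S (y :: b).
Proof.
elim: a x => [|c a IH] x; first by rewrite /= add0n.
rewrite cat_cons.
have -> : pairs S (x :: (c :: a) ++ y :: b) = ((x \in S) && (c \in S)) + pairs S ((c :: a) ++ y :: b) by [].
by rewrite IH pairs_cons2 /= !addnA.
Qed.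

Lemma pairs_all (S : {set 'I_n}) t : all (fun v => v \in S) t -> pairs S t = (size t).-1.
Proof.
elim: t => [|a t IH] //; case: t IH => [|b t] IH // /andP[aS H].
by rewrite pairs_cons2 aS IH //; case/andP: H => -> _.
Qed.

Lemma pairs_cons_notin (S : {set 'I_n}) a s : a \notin S -> pairs S (a :: s) = pairs S s.
Proof. by case: s => [|b s] //= /negbTE ->. Qed.

Lemma uniq_flatten_mem (Rs : seq (seq 'I_n)) r : r \in Rs -> uniq (flatten Rs) -> uniq r.
Proof.
elim: Rs => [|r' Rs IH] //=; rewrite inE cat_uniq => /orP[/eqP->|rin] /and3P[u1 _ u2] //.
exact: IH.
Qed.

Lemma routes_disj (Rs : seq (seq 'I_n)) r1 r2 v : uniq (flatten Rs) ->
  r1 \in Rs -> r2 \in Rs -> v \in r1 -> v \in r2 -> r1 = r2.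
Proof.
elim: Rs => [|r Rs IH] //=; rewrite cat_uniq => /and3P[_ H u2].
have NH : forall r', r' \in Rs -> v \in r' -> v \in r -> False.
  move=> r' r'in vr' vr; move/hasP: H; apply; exists v => //.
  by apply/flattenP; exists r'.
rewrite !inE => /orP[/eqP->|i1] /orP[/eqP->|i2] v1 v2 //.
- by case: (NH r2).
- by case: (NH r1).
- exact: IH.
Qed.

Lemma uniq_routes (Rs : seq (seq 'I_n)) :
  all (fun r => 0 < size r) Rs -> uniq (flatten Rs) -> uniq Rs.
Proof.
elim: Rs => [|r Rs IH] //= /andP[rpos aR]; rewrite cat_uniq => /and3P[u1 H u2].
rewrite IH // andbT; apply/negP => rin.
case: r rpos rin H {u1} => [|a r] // _ rin; apply/negP/negPn/hasP; exists a; rewrite ?inE ?eqxx //.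
by apply/flattenP; exists (a :: r); rewrite // inE eqxx.
Qed.

End Comb.

Local Open Scope ring_scope.

Section Seg.
Variables (R : realType) (n : nat).

Definition od (F : 'I_n -> R) (o : vertex n) : R := if o is Some v then F v else 0.

Definition seg (C : R) (z dd : 'I_n -> R) (r : seq 'I_n) : Prop :=
  forall u t w, r = u ++ t ++ w -> t != [::] ->
    \sum_(v <- t) dd v <= C * (1 + \sum_(v <- t) z v).

Lemma seg_suffix C z dd p r : seg C z dd (p ++ r) -> seg C z dd r.
Proof. by move=> H u t w E tn; apply: (H (p ++ u) t w) => //; rewrite E catA. Qed.

Lemma seg_prefix C z dd t w : seg C z dd (t ++ w) -> t != [::] ->
  \sum_(v <- t) dd v <= C * (1 + \sum_(v <- t) z v).
Proof. by move=> H; apply: (H [::] t w). Qed.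

Lemma run_split (S : {set 'I_n}) a r : a \in S -> exists t w,
  [/\ a :: r = t ++ w, t != [::], all (fun v => v \in S) t &
      (if w is y :: _ then y \notin S else true)].
Proof.
elim: r a => [|b r IH] a aS; first by exists [:: a], [::]; rewrite /= aS.
case bS: (b \in S).
  have [t [w [E tn At Hw]]] := IH b bS.
  by exists (a :: t), w; rewrite /= E aS At.
by exists [:: a], (b :: r); rewrite /= aS bS.
Qed.

Lemma runs_ineq C z dd (S : {set 'I_n}) r : seg C z dd r ->
  \sum_(v <- r | v \in S) dd v <=
  C * (\sum_(v <- r | v \in S) z v + (count (mem S) r)%:R - (pairs S r)%:R).
Proof.
have [m lt_r_m] := ubnP (size r); elim: m r lt_r_m => // m IH [|a r'] Hs Hseg.
  by rewrite !big_nil /= !mulr0n subr0 addr0 mulr0.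
case aS: (a \in S); last first.
  rewrite pairs_cons_notin; last by rewrite aS.
  rewrite !big_cons aS /= aS add0n.
  by apply: IH; [rewrite /= ltnS in Hs | exact: (seg_suffix (p := [:: a]))].
have [t [w [E tn At Hw]]] := run_split r' aS.
rewrite E in Hseg Hs *.
have Hw' : seg C z dd w by exact: seg_suffix Hseg.
have Ht := seg_prefix Hseg tn.
have sw : (size w < m)%N.
  rewrite size_cat in Hs; case: t tn {E At Hseg Ht} Hs => // x t _ /=; lia.
have IHw := IH w sw Hw'.
rewrite !big_cat /= -!(big_filter t) (all_filterP At) count_cat.
have -> : count (mem S) t = size t by apply/eqP; rewrite -all_count.
have -> : pairs S (t ++ w) = ((size t).-1 + pairs S w)%N.
  case: t tn At {E Hseg Ht Hs} => // x t _ At.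
  rewrite -(pairs_all At); case: w Hw {Hw' IHw sw} => [|y w] Hw.
    by rewrite cats0 addn0.
  by rewrite pairs_cat (negbTE Hw) andbF addn0.
have st : (0 < size t)%N by case: t tn {E At Hseg Ht Hs}.
rewrite !natrD.
have -> : (size t)%:R = ((size t).-1)%:R + 1 :> R by rewrite natr1 prednK.
move: IHw Ht; set A := \sum_(v <- t) dd v; set B := \sum_(v <- t) z v.
set D := \sum_(i <- w | i \in S) dd i; set Z := \sum_(i <- w | i \in S) z i.
set c := (count (mem S) w)%:R; set p := (pairs S w)%:R; set k := ((size t).-1)%:R.
move=> H1 H2.
have -> : C * (B + Z + (k + 1 + c) - (k + p)) = C * (1 + B) + C * (Z + c - p) by ring.
exact: lerD.
Qed.

Lemma rv_succ (r : route n) k : rv r k.+1 = nth None (map Some r) k.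
Proof. by []. Qed.

Lemma sum_shift (G : nat -> R) a b :
  \sum_(a <= k < a + b) G k = \sum_(0 <= k < b) G (k + a)%N.
Proof. by rewrite -{1}(add0n a) big_addn addKn. Qed.

Lemma sum_conv F u t w : \sum_(v <- t) F v =
  \sum_(size u <= k < size u + size t) od F (rv (u ++ t ++ w) k.+1).
Proof.
rewrite sum_shift -(big_map (@Some _) xpredT (od F)) (big_nth None) size_map.
apply: eq_big_nat => k /andP[_ kt].
rewrite rv_succ !map_cat nth_cat size_map ltnNge leq_addl /= addnK.
by rewrite nth_cat size_map kt.
Qed.

Lemma segI C z dd r : seg C z dd r -> forall j i, (j < i)%N -> (i <= size r)%N ->
  \sum_(j <= k < i) od dd (rv r k.+1) <= C * (1 + \sum_(j <= k < i) od z (rv r k.+1)).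
Proof.
move=> H j i ji ir.
have E : r = take j r ++ drop j (take i r) ++ drop i r.
  by rewrite catA -{1}(take_takel _ (ltnW ji)) cat_take_drop cat_take_drop.
have su : size (take j r) = j by rewrite size_take; case: ltnP => //; lia.
have st : size (drop j (take i r)) = (i - j)%N by rewrite size_drop size_take; case: ltnP => //; lia.
have := H _ _ _ E; rewrite !(sum_conv _ (take j r) _ (drop i r)) -E su st.
have -> : (j + (i - j))%N = i by lia.
apply; apply/eqP => t0; move: st; rewrite t0 /=; lia.
Qed.

Lemma segI_inv C z dd r :
  (forall j i, (j < i)%N -> (i <= size r)%N ->
    \sum_(j <= k < i) od dd (rv r k.+1) <= C * (1 + \sum_(j <= k < i) od z (rv r k.+1))) ->
  seg C z dd r.
Proof.
move=> H u t w E tn; rewrite !(sum_conv _ u t w) -E; apply: H.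
  by case: t tn {E} => // x t _ /=; lia.
by rewrite E !size_cat; lia.
Qed.

Lemma rv_some (r : route n) k : (k < size r)%N -> exists v, rv r k.+1 = Some v.
Proof.
move=> kr; rewrite rv_succ.
have : nth None (map Some r) k \in map Some r by apply: mem_nth; rewrite size_map.
by case/mapP => v _ ->; exists v.
Qed.

Lemma rv_none (r : route n) : rv r (size r).+1 = None.
Proof. by rewrite rv_succ nth_default // size_map. Qed.

Lemma rv_index (r : route n) i v : uniq r -> rv r i.+1 = Some v ->
  (i < size r)%N /\ index v r = i /\ v \in r.
Proof.
move=> ur; rewrite rv_succ => E.
have ir : (i < size r)%N.
  by rewrite ltnNge; apply/negP => H; move: E; rewrite nth_default // size_map.
have vr : Some v \in map Some r by rewrite -E mem_nth // size_map.
split=> //; split; last by move: vr; rewrite mem_map //; apply: Some_inj.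
rewrite -(index_map (@Some_inj _)) -E index_uniq // ?size_map //.
by rewrite map_inj_uniq //; apply: Some_inj.
Qed.

End Seg.

Section Y.
Variables (R : realType) (n N : nat).

Lemma Y_nec (C : rat) (d : 'I_N -> 'I_n -> rat) xi (r : route n) (y : 'I_n -> R) :
  in_Y C d xi r y -> seg (ratr C) y (fun v => ratr (d xi v)) r.
Proof.
case=> _ [f [g [f0 g0 flow cap gle]]].
set dd := fun v => ratr (d xi v) : R.
apply: segI_inv => j i ji ir.
set Fk := fun k => f (rv r k) (rv r k.+1).
have key : forall i', (j <= i')%N -> (i' <= size r)%N ->
    Fk j + \sum_(j <= k < i') od dd (rv r k.+1) = Fk i' + \sum_(j <= k < i') od g (rv r k.+1).
  elim=> [|i' IH] H1 H2.
    by move: H1; rewrite leqn0 => /eqP ->; rewrite !big_geq.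
  case: (ltngtP j i'.+1) H1 => // [ji' _|<- _]; last by rewrite !big_geq.
  rewrite !big_nat_recr //= addrA IH //; last exact: ltnW.
  have [v Ev] := rv_some H2.
  rewrite Ev /= -addrA [_ + dd v]addrC addrA.
  have := flow i'.+1 _ v Ev; rewrite /= => ->; last by rewrite H2.
  by rewrite /Fk; ring.
have := key i (ltnW ji) ir.
have Fj0 : 0 <= Fk j by apply: f0.
have FiC : Fk i <= ratr C by apply: (cap i.+1); rewrite /= ltnS ir.
have gs : \sum_(j <= k < i) od g (rv r k.+1) <= ratr C * \sum_(j <= k < i) od y (rv r k.+1).
  rewrite mulr_sumr; apply: ler_sum_nat => k /andP[_ ki].
  have [v Ev] := rv_some (leq_trans ki ir).
  rewrite Ev /=; apply: (gle k.+1) => //; rewrite /=; exact: leq_trans ki ir.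
move=> E; rewrite mulrDr mulr1.
have -> : \sum_(j <= k < i) od dd (rv r k.+1) = Fk i + \sum_(j <= k < i) od g (rv r k.+1) - Fk j.
  by rewrite -E; ring.
lra.
Qed.

Fixpoint Lf (Cr : R) (dd y : 'I_n -> R) (r : route n) (k : nat) : R :=
  if k is k'.+1 then Order.max 0 (Lf Cr dd y r k' + od dd (rv r k) - Cr * od y (rv r k)) else 0.

Lemma Lf_ge0 Cr dd y r k : 0 <= Lf Cr dd y r k.
Proof. by case: k => //= k; rewrite le_max lexx. Qed.

Lemma Lf_inv Cr dd y r k : (k <= size r)%N -> exists2 j, (j <= k)%N &
  Lf Cr dd y r k = \sum_(j <= m < k) (od dd (rv r m.+1) - Cr * od y (rv r m.+1)).
Proof.
elim: k => [|k IH] H; first by exists 0%N => //; rewrite big_geq.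
have [j jk E] := IH (ltnW H).
rewrite /=.
set X := _ + _ - _.
have [X0|X0] := leP X 0.
  by exists k.+1 => //; rewrite big_geq // max_l.
exists j; first exact: leqW.
by rewrite big_nat_recr //= /X E addrA.
Qed.

Lemma Lf_le Cr dd y r k : 0 <= Cr -> seg Cr y dd r -> (k <= size r)%N -> Lf Cr dd y r k <= Cr.
Proof.
move=> C0 Hs kr; have [j jk ->] := Lf_inv Cr dd y kr.
case: (ltngtP j k) jk => // [jk _|-> _]; last by rewrite big_geq.
have := segI Hs jk kr.
rewrite sumrB -mulr_sumr mulrDr mulr1; lra.
Qed.

Lemma Y_suff (C : rat) (d : 'I_N -> 'I_n -> rat) xi (r : route n) (y : 'I_n -> R) :
  0 <= C -> (forall v, 0 <= d xi v) -> (forall v, is_intR (y v) /\ 0 <= y v) ->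
  uniq r -> seg (ratr C) y (fun v => ratr (d xi v)) r -> in_Y C d xi r y.
Proof.
move=> C0 d0 Hy ur Hs; split => //.
set dd := fun v => ratr (d xi v) : R.
set Cr := ratr C : R.
have Cr0 : 0 <= Cr by rewrite ler0q.
have dd0 : forall v, 0 <= dd v by move=> v; rewrite ler0q.
set L := Lf Cr dd y r.
pose f (a b : vertex n) := if b is Some v then L (index v r) else L (size r).
pose g (v : 'I_n) := if v \in r then L (index v r) + dd v - L (index v r).+1 else 0.
have fE : forall i, (i <= size r)%N -> f (rv r i) (rv r i.+1) = L i.
  move=> i ir; rewrite /f; case E: (rv r i.+1) => [v|].
    by have [_ [-> _]] := rv_index ur E.
  case: (ltngtP i (size r)) ir => // [ilt _|-> _] //.
  by have [v Ev] := rv_some ilt; rewrite Ev in E.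
have Lstep : forall i v, rv r i.+1 = Some v -> L i.+1 = Order.max 0 (L i + dd v - Cr * y v).
  by move=> i v E; rewrite /L /= E.
exists f, g; split.
- by move=> a b; rewrite /f; case: b => *; apply: Lf_ge0.
- move=> v; rewrite /g; case: ifP => // vr.
  set k := index v r.
  have E : rv r k.+1 = Some v by rewrite rv_succ (nth_map v) ?index_mem // nth_index.
  rewrite (Lstep _ _ E) subr_ge0 ge_max.
  have := Lf_ge0 Cr dd y r k; have := dd0 v; have := (Hy v).2.
  rewrite /L => h1 h2 h3; apply/andP; split; first lra.
  by rewrite lerBlDr lerDl mulr_ge0.
- move=> [|i] // /andP[_ ir] v E /=.
  have [_ [Ei vr]] := rv_index ur E.
  rewrite fE ?(ltnW ir) // fE // /g vr Ei; ring.
- move=> [|i] // /andP[_ ir] /=; rewrite fE //.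
  exact: Lf_le.
- move=> [|i] // /andP[_ ir] v E /=.
  have [_ [Ei vr]] := rv_index ur E.
  rewrite /g vr Ei (Lstep _ _ E).
  have : L i + dd v - Cr * y v <= Order.max 0 (L i + dd v - Cr * y v) by rewrite le_max lexx orbT.
  lra.
Qed.

End Y.

Section Enc.
Variables (R : realType) (n N : nat).

Lemma XE (x : {set vertex n} -> R) Rs S : encodes x Rs ->
  x_E x S = (\sum_(r <- Rs) pairs S r)%:R.
Proof.
case=> _ uf _ He; rewrite /x_E.
rewrite (eq_bigr (fun e => (\sum_(r <- Rs) route_edge_count r e)%:R)); last first.
  by move=> e /andP[ie _]; apply: He.
rewrite -natr_sum exchange_big /=; congr (_%:R).
rewrite big_seq [RHS]big_seq; apply: eq_bigr => r rin.
under eq_bigr do rewrite cnt_pcg.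
rewrite sum_pcg pcg_edgeS //; exact: uniq_flatten_mem uf.
Qed.

Lemma L1 (x : {set vertex n} -> R) Rs r u t w : encodes x Rs -> r \in Rs ->
  r = u ++ t ++ w -> t != [::] -> (size t)%:R - 1 <= x_E x [set v in t].
Proof.
move=> He rin E tn; rewrite (XE _ He).
have st : (0 < size t)%N by case: t tn {E}.
have -> : (size t)%:R - 1 = ((size t).-1)%:R :> R by rewrite -{1}(prednK st) -natr1 addrK.
rewrite ler_nat.
have -> : (size t).-1 = pairs [set v in t] t.
  by rewrite pairs_all //; apply/allP => v; rewrite inE.
rewrite (perm_big _ (perm_to_rem rin)) big_cons.
apply: leq_trans (leq_addr _ _).
rewrite E; apply: leq_trans (pairs_catge _ _ _) ; apply: leq_trans (leq_addl _ _).
by apply: leq_trans (pairs_catge _ _ _); apply: leq_addr.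
Qed.

Definition is_intR_sum (I : Type) (r : seq I) (P : pred I) (F : I -> R) :
  (forall i, P i -> is_intR (F i)) -> is_intR (\sum_(i <- r | P i) F i).
Proof.
move=> H; elim: r => [|a r IH0]; first by exists 0; rewrite big_nil mulr0z.
have [z IH] := IH0.
rewrite big_cons; case: ifP => Pa; last by exists z.
have [za ->] := H a Pa; exists (za + z); by rewrite IH intrD.
Qed.

Lemma is_intR_nat k : is_intR (k%:R : R).
Proof. by exists k%:Z. Qed.

Lemma is_intR_add a b : is_intR a -> is_intR b -> is_intR (a + b : R).
Proof. by move=> [za ->] [zb ->]; exists (za + zb); rewrite intrD. Qed.

Lemma is_intR_opp a : is_intR a -> is_intR (- a : R).
Proof. by move=> [za ->]; exists (- za); rewrite mulrNz. Qed.

Lemma part_sum (Rs : seq (seq 'I_n)) (F : 'I_n -> R) (S : {set 'I_n}) :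
  uniq (flatten Rs) -> (forall v, v \in flatten Rs) ->
  \sum_(v in S) F v = \sum_(r <- Rs) \sum_(v <- r | v \in S) F v.
Proof.
move=> uf cov; rewrite -big_flatten /=; apply: perm_big.
apply: uniq_perm => //; first exact: index_enum_uniq.
by move=> v; rewrite mem_index_enum cov.
Qed.

Lemma card_part (Rs : seq (seq 'I_n)) (S : {set 'I_n}) :
  uniq (flatten Rs) -> (forall v, v \in flatten Rs) ->
  (#|S|%:R : R) = \sum_(r <- Rs) (count (mem S) r)%:R.
Proof.
move=> uf cov; rewrite -sumr_const (part_sum _ _ uf cov); apply: eq_bigr => r _.
by rewrite -sum1_count natr_sum.
Qed.

Lemma K1 (C : rat) (d : 'I_N -> 'I_n -> rat) xi (S : {set 'I_n}) : 0 < C ->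
  \sum_(v in S) (ratr (d xi v) : R) <= ratr C * kS R C d xi S.
Proof.
move=> C0; rewrite /kS /ceilR -rmorph_sum -ratr_int -rmorphM /= ler_rat.
rewrite mulrC -ler_pdivrMr //; exact: ceil_ge.
Qed.

Lemma K2 (C : rat) (d : 'I_N -> 'I_n -> rat) xi (S : {set 'I_n}) (m : int) : 0 < C ->
  \sum_(v in S) (ratr (d xi v) : R) <= ratr C * m%:~R -> kS R C d xi S <= m%:~R.
Proof.
move=> C0 H; rewrite /kS /ceilR ler_int ceil_le_int ler_pdivrMr // mulrC.
by rewrite -(ler_rat R) rmorphM /= ratr_int rmorph_sum.
Qed.

Lemma L4 (C : rat) (d : 'I_N -> 'I_n -> rat) xi (x : {set vertex n} -> R) Rs
  (z : 'I_n -> R) : 0 < C -> encodes x Rs ->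
  (forall r, r \in Rs -> seg (ratr C) z (fun v => ratr (d xi v)) r) ->
  (forall v, is_intR (z v)) ->
  forall S, kS R C d xi S + x_E x S - #|S|%:R <= \sum_(v in S) z v.
Proof.
move=> C0 He Hseg Hz S.
have He' := He; case: He' => _ uf cov _.
have H : \sum_(r <- Rs) \sum_(v <- r | v \in S) (ratr (d xi v) : R) <=
    \sum_(r <- Rs) (ratr C * (\sum_(v <- r | v \in S) z v + (count (mem S) r)%:R - (pairs S r)%:R)).
  rewrite big_seq [X in _ <= X]big_seq; apply: ler_sum => r rin.
  exact: runs_ineq (Hseg r rin).
rewrite -(part_sum _ _ uf cov) -mulr_sumr sumrB big_split -(part_sum _ _ uf cov) in H.
rewrite -(card_part _ uf cov) -natr_sum -(XE _ He) in H.
have [M EM] : is_intR (\sum_(v in S) z v + #|S|%:R - x_E x S).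
  apply: is_intR_add; first apply: is_intR_add.
  - by apply: is_intR_sum => v _.
  - exact: is_intR_nat.
  by rewrite (XE _ He); apply/is_intR_opp/is_intR_nat.
rewrite EM in H; have := K2 C0 H; rewrite -EM; lra.
Qed.

End Enc.

Section Exist.
Variables (R : realType) (n : nat).
Notation V := (vertex n).

Definition de (u : 'I_n) : {set V} := [set None; Some u].
Definition ce (u w : 'I_n) : {set V} := [set Some u; Some w].

Lemma edge_None (e : {set V}) : is_edge e -> None \in e -> exists v, e = de v.
Proof.
move=> /cards2P [a [b [ab ->]]]; rewrite !inE => /orP[] /eqP Ea; subst.
  by case: b ab => [v|] ab; [exists v | by rewrite eqxx in ab].
by case: a ab => [v|] ab; [exists v; rewrite setC2 | by rewrite eqxx in ab].
Qed.

Lemma edge_notNone (e : {set V}) : is_edge e -> None \notin e ->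
  exists u w, u != w /\ e = ce u w.
Proof.
move=> /cards2P [a [b [ab ->]]]; rewrite !inE negb_or => /andP[na nb].
case: a ab na => [u|] //; case: b nb => [w|] // _ ab _.
by exists u, w; split => //; apply: contra ab => /eqP ->.
Qed.

Lemma de_edge u : is_edge (de u).
Proof. by rewrite /is_edge /de cards2. Qed.

Lemma sum_eq1R (Q : pred {set V}) (s : {set V}) :
  \sum_(e | Q e) ((s == e)%:R : R) = (Q s)%:R.
Proof. by rewrite -natr_sum sum_eq1. Qed.

Lemma sum_eq1R' (Q : pred {set V}) (s : {set V}) :
  \sum_(e | Q e) ((e == s)%:R : R) = (Q s)%:R.
Proof. by under eq_bigr do rewrite eq_sym; exact: sum_eq1R. Qed.

Lemma deg_eq (x : {set V} -> R) v :
  x_delta_cust x v = \sum_(e | is_edge e && (Some v \in e)) x e.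
Proof. by []. Qed.

Definition Inv (x : {set V} -> R) :=
 [/\ forall e, is_edge e -> exists2 k : nat, (k <= 2)%N & x e = k%:R,
     forall v, x_delta_cust x v = 2 &
     forall S : {set 'I_n}, S != set0 -> x_E x S <= #|S|%:R - 1].

Lemma flatten_single (s : seq 'I_n) : flatten [seq [:: v] | v <- s] = s.
Proof. by elim: s => //= a s ->. Qed.

Lemma enc_base (x : {set V} -> R) : Inv x ->
  (forall e, is_edge e -> None \notin e -> x e = 0) -> exists Rs, encodes x Rs.
Proof.
move=> [Hk Hdeg Hsub] H0.
exists [seq [:: v] | v <- index_enum 'I_n]; split.
- by apply/allP => r /mapP [v _ ->].
- by rewrite flatten_single index_enum_uniq.
- by move=> v; rewrite flatten_single mem_index_enum.
move=> e ie; rewrite big_map.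
have cntE : forall v, route_edge_count [:: v] e = ((de v == e) * 2)%N.
  move=> v; rewrite cnt_pcg /pathv /= addn0 -/(de v) setC2 -/(de v).
  by case: (de v == e).
under eq_bigr do rewrite cntE.
case: (boolP (None \in e)) => [Ne|nNe]; last first.
  rewrite H0 // big1 // => v _; case: eqP => // E.
  by move: nNe; rewrite -E !inE eqxx.
have [v0 ->] := edge_None ie Ne.
rewrite -big_distrl /= natrM.
have -> : (\sum_(v : 'I_n) (de v == de v0 : nat))%N = 1%N.
  under eq_bigr do rewrite eq_de1 eq_sym.
  by rewrite sum_eq1.
rewrite mul1r.
have := Hdeg v0; rewrite deg_eq (bigD1 (de v0)) /=; last by rewrite de_edge !inE eqxx orbT.
rewrite big1 ?addr0 // => e1 /andP[/andP[ie' ve] ne].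
apply: H0 => //; apply/negP => Ne'.
have [v1 E1] := edge_None ie' Ne'.
move: ve ne; rewrite E1 !inE /= => /eqP [->].
by rewrite eqxx.
Qed.


Lemma orient_head (w a : 'I_n) s : (a == w) || (last a s == w) ->
  exists t, [/\ perm_eq (w :: t) (a :: s), uniq (a :: s) -> uniq (w :: t) &
    forall P, pcg P (pathv (w :: t)) = pcg P (pathv (a :: s))].
Proof.
case/orP => /eqP E.
  by exists s; rewrite -E; split.
exists (rev (belast a s)).
have E2 : rev (a :: s) = w :: rev (belast a s) by rewrite lastI rev_rcons E.
rewrite -E2; split.
- by rewrite perm_rev.
- by rewrite rev_uniq.
- by move=> P; rewrite pathv_rev pcg_rev.
Qed.

Lemma orient_last (u a : 'I_n) s : (a == u) || (last a s == u) ->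
  exists b t, [/\ last b t = u, perm_eq (b :: t) (a :: s), uniq (a :: s) -> uniq (b :: t) &
    forall P, pcg P (pathv (b :: t)) = pcg P (pathv (a :: s))].
Proof.
case/orP => /eqP E; last by exists a, s; split.
exists (last a s), (rev (belast a s)).
have E2 : rev (a :: s) = last a s :: rev (belast a s) by rewrite lastI rev_rcons.
rewrite -E2; split.
- have := f_equal (last u) E2; rewrite /= => <-.
  by rewrite rev_cons last_rcons.
- by rewrite perm_rev.
- by rewrite rev_uniq.
- by move=> P; rewrite pathv_rev pcg_rev.
Qed.

Lemma sum_pos_ex (I : eqType) (s : seq I) (F : I -> nat) :
  (0 < \sum_(r <- s) F r)%N -> exists2 r, r \in s & (0 < F r)%N.
Proof.
elim: s => [|a s IH]; first by rewrite big_nil.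
rewrite big_cons; case: (posnP (F a)) => [->|Fa] H.
  by have [r rin Fr] := IH H; exists r => //; rewrite inE rin orbT.
by exists a => //; rewrite inE eqxx.
Qed.

Lemma xE_shift (x x' : {set V} -> R) (a b c : {set V}) (Q : pred {set V}) :
  (forall e, Q e -> x e = x' e + (e == a)%:R - (e == b)%:R - (e == c)%:R) ->
  \sum_(e | Q e) x e = \sum_(e | Q e) x' e + (Q a)%:R - (Q b)%:R - (Q c)%:R.
Proof.
move=> H; rewrite (eq_bigr _ H) !sumrB big_split /=.
by rewrite !sum_eq1R'.
Qed.

Lemma end_route (x' : {set V} -> R) Rs' u r1 : encodes x' Rs' -> r1 \in Rs' -> u \in r1 ->
  1 <= x' (de u) -> exists a s, r1 = a :: s /\ (a == u) || (last a s == u).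
Proof.
move=> He r1in ur1 H1; have He' := He; case: He' => allp uf cov Hx.
rewrite Hx ?de_edge // (ler_nat R 1) in H1.
have [r rin Hr] := sum_pos_ex H1.
move: Hr; rewrite cnt_pcg.
have := allP allp r rin; case: r rin => [|a s] // rin _.
rewrite pcg_depot => Hr.
have ur : u \in a :: s.
  case: (a =P u) Hr => [<- _|_]; first by rewrite inE eqxx.
  by case: (last a s =P u) => [<- _|_] //; apply: mem_last.
have E := routes_disj uf rin r1in ur ur1.
exists a, s; split => //.
by move: Hr; case: (a == u); case: (last a s == u).
Qed.

Lemma merge_step (x x' : {set V} -> R) Rs' u w : u != w -> encodes x' Rs' ->
  (forall e, is_edge e -> x e = x' e + (e == ce u w)%:R - (e == de u)%:R - (e == de w)%:R) ->
  1 <= x' (de u) -> 1 <= x' (de w) ->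
  (forall S : {set 'I_n}, S != set0 -> x_E x S <= #|S|%:R - 1) ->
  exists Rs, encodes x Rs.
Proof.
move=> uw He Hxx Hu Hw Hsub.
have He' := He; case: He' => allp uf cov Hx.
have XEx : forall S, x_E x S = x_E x' S + ((u \in S) && (w \in S))%:R.
  move=> S; rewrite /x_E (xE_shift (x' := x') (a := ce u w) (b := de u) (c := de w)); last first.
    by move=> e /andP[ie _]; apply: Hxx.
  by rewrite /ce is_edge_SS uw sub_SS /de !sub_N !andbF /= !subr0.
have [r1 r1in ur1] : exists2 r1, r1 \in Rs' & u \in r1 by apply/flattenP.
have [r2 r2in wr2] : exists2 r2, r2 \in Rs' & w \in r2 by apply/flattenP.
have r12 : r1 != r2.
  apply/eqP => E; rewrite -E in wr2.
  pose S := [set v in r1].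
  have ur1' : uniq r1 := uniq_flatten_mem r1in uf.
  have := L1 He r1in (u := [::]) (w := [::]) (t := r1); rewrite cats0 => /(_ erefl).
  have r1n : r1 != [::] by apply/eqP => r0; rewrite r0 in ur1.
  move=> /(_ r1n) HL.
  have Sn : S != set0 by apply/set0Pn; exists u; rewrite inE.
  have := Hsub S Sn; rewrite XEx !inE ur1 wr2 /=.
  have -> : #|S| = size r1 by rewrite cardsE; apply/card_uniqP.
  lra.
have [a1 [s1 [E1 H1]]] := end_route He r1in ur1 Hu.
have [a2 [s2 [E2 H2]]] := end_route He r2in wr2 Hw.
have [b1 [t1 [L1 P1 U1 C1]]] := orient_last H1.
have [t2 [P2 U2 C2]] := orient_head H2.
set M := (b1 :: t1) ++ (w :: t2).
set rest := filter (fun r => (r != r1) && (r != r2)) Rs'.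
have uRs' := uniq_routes allp uf.
have Pm : perm_eq Rs' (r1 :: r2 :: rest).
  apply: uniq_perm => //.
    rewrite /= inE negb_or r12 /rest !mem_filter !eqxx /= andbF /=.
    by rewrite filter_uniq.
  move=> r; rewrite !inE mem_filter.
  case: (eqVneq r r1) => [->|n1]; first by rewrite r1in.
  by case: (eqVneq r r2) => [->|n2] //=; rewrite r2in.
have Pf : perm_eq (flatten (M :: rest)) (flatten Rs').
  have Q : perm_eq (flatten (M :: rest)) (flatten (r1 :: r2 :: rest)).
    change (perm_eq (M ++ flatten rest) (r1 ++ r2 ++ flatten rest)).
    rewrite /M -catA {1}E1 {1}E2; apply: perm_cat => //; apply: perm_cat => //.
  apply: perm_trans Q _; rewrite perm_sym; exact: perm_flatten.
exists (M :: rest); split.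
- rewrite /= /M; apply/allP => r; rewrite mem_filter => /andP[_ rin].
  exact: allP allp r rin.
- by rewrite (perm_uniq Pf).
- by move=> v; rewrite (perm_mem Pf).
move=> e ie; rewrite Hxx // Hx // (perm_big _ Pm) /= !big_cons.
have := pcg_merge (fun s => s == e) b1 t1 w t2.
rewrite C1 C2 L1 -E1 -E2 -!cnt_pcg -/M => /(f_equal (fun k => k%:R : R)).
rewrite !natrD setC2 -/(de u) -/(de w) -/(ce u w) ![(_ == e)]eq_sym.
set A := (route_edge_count M e)%:R; set B := (route_edge_count r1 e)%:R.
set Cc := (route_edge_count r2 e)%:R.
move=> HH; lra.
Qed.


Definition cedges (x : {set V} -> R) :=
  [set e : {set V} | is_edge e && (None \notin e) && (x e != 0)].

Lemma ge_one_term (x : {set V} -> R) (Q : pred {set V}) e0 :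
  (forall e, Q e -> 0 <= x e) -> Q e0 -> x e0 <= \sum_(e | Q e) x e.
Proof.
move=> H0 Qe0; rewrite (bigD1 e0) //= lerDl; apply: sumr_ge0 => e /andP[Qe _].
exact: H0.
Qed.

Lemma ge_two_terms (x : {set V} -> R) (Q : pred {set V}) e0 e1 :
  (forall e, Q e -> 0 <= x e) -> Q e0 -> Q e1 -> e0 != e1 ->
  x e0 + x e1 <= \sum_(e | Q e) x e.
Proof.
move=> H0 Q0 Q1 ne; rewrite (bigD1 e0) //= lerD2l (bigD1 e1) /=; last by rewrite Q1 eq_sym.
rewrite lerDl; apply: sumr_ge0 => e /andP[/andP[Qe _] _]; exact: H0.
Qed.

Lemma enc_exists m (x : {set V} -> R) : (#|cedges x| <= m)%N -> Inv x ->
  exists Rs, encodes x Rs.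
Proof.
elim: m x => [|m IH] x Hm Hinv.
  apply: enc_base => // e ie nNe; apply/eqP; apply: contraTT Hm => xe.
  by rewrite -ltnNge card_gt0; apply/set0Pn; exists e; rewrite inE ie nNe xe.
case: (boolP [exists e, e \in cedges x]) => [/existsP [e0]|]; last first.
  move=> /existsPn H; apply: enc_base => // e ie nNe; apply/eqP.
  by have := H e; rewrite inE ie nNe /= negbK.
rewrite inE => /andP[/andP[ie0 nN0] x0].
have [u [w [uw E0]]] := edge_notNone ie0 nN0.
case: Hinv => Hk Hdeg Hsub.
have x_ge0 : forall e, is_edge e -> 0 <= x e.
  by move=> e ie; have [k _ ->] := Hk e ie; rewrite ler0n.
have xe0 : x (ce u w) = 1.
  have [k k2 Ek] := Hk _ ie0; rewrite E0 in Ek; rewrite Ek.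
  case: k k2 Ek => [|[|[|k]]] // _ Ek.
    by move: x0; rewrite E0 Ek eqxx.
  pose S := [set u; w].
  have Sn : S != set0 by apply/set0Pn; exists u; rewrite !inE eqxx.
  have := Hsub S Sn; rewrite cards2 uw.
  have : x (ce u w) <= x_E x S.
    apply: ge_one_term; first by move=> e /andP[ie _]; apply: x_ge0.
    by rewrite /ce is_edge_SS uw sub_SS !inE !eqxx orbT.
  rewrite Ek /=; lra.
have ce_de : forall v, ce u w != de v.
  by move=> v; apply/negP => /eqP E; have := eq_de2 u w v; rewrite -/(ce u w) -/(de v) E eqxx.
have xdv : forall v, (v == u) || (v == w) -> x (de v) <= 1.
  move=> v vuw; have := Hdeg v; rewrite deg_eq => Hd.
  have Q0 : forall e, is_edge e && (Some v \in e) -> 0 <= x e.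
    by move=> e /andP[ie _]; apply: x_ge0.
  have := ge_two_terms Q0 (e0 := ce u w) (e1 := de v) _ _ (ce_de v).
  rewrite Hd xe0 de_edge /ce /de is_edge_SS uw !inE eqxx orbT /=.
  rewrite !(inj_eq (@Some_inj _)) vuw => /(_ erefl erefl); lra.
have dudw : de u != de w by rewrite /de eq_de1.
pose x' := fun e => if e == ce u w then 0 else if (e == de u) || (e == de w) then x e + 1 else x e.
have Hxx : forall e, x e = x' e + (e == ce u w)%:R - (e == de u)%:R - (e == de w)%:R.
  move=> e; rewrite /x'; case: (eqVneq e (ce u w)) => [->|n1].
    by rewrite xe0 (negbTE (ce_de u)) (negbTE (ce_de w)) /=; ring.
  case: (eqVneq e (de u)) => [->|n2]; first by rewrite (negbTE dudw) /=; ring.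
  by case: (eqVneq e (de w)) => [->|n3] /=; ring.
have Hinv' : Inv x'.
  split.
  - move=> e ie; rewrite /x'; case: ifP => _; first by exists 0%N.
    case: ifP => Hd; last exact: Hk.
    have [k k2 Ek] := Hk e ie.
    have k1 : (k <= 1)%N.
      rewrite -(ler_nat R) -Ek.
      by case/orP: Hd => /eqP ->; apply: xdv; rewrite eqxx ?orbT.
    by exists k.+1; rewrite ?ltnS // Ek -natr1.
  - move=> v; have := Hdeg v; rewrite !deg_eq.
    rewrite (xE_shift (x' := x') (a := ce u w) (b := de u) (c := de w)); last by move=> e _; apply: Hxx.
    rewrite !de_edge /ce /de is_edge_SS uw /= !inE /= !(inj_eq (@Some_inj _)).
    case: (eqVneq v u) => [->|vu]; first by rewrite (negbTE uw) /= ?mulr1n ?mulr0n; lra.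
    by case: (eqVneq v w) => [->|vw]; rewrite /= ?mulr1n ?mulr0n; lra.
  - move=> S Sn; have := Hsub S Sn; rewrite /x_E.
    rewrite (xE_shift (x' := x') (a := ce u w) (b := de u) (c := de w)); last by move=> e _; apply: Hxx.
    rewrite /de !sub_N !andbF /= !subr0.
    case: (_ && _) => /=; lra.
have Hm' : (#|cedges x'| <= m)%N.
  have sub : cedges x' \subset cedges x :\ ce u w.
    apply/subsetP => e; rewrite !inE => /andP[/andP[ie nNe] xe].
    have n1 : e != ce u w by apply: contraNN xe => /eqP ->; rewrite /x' eqxx.
    rewrite n1 ie nNe /=; move: xe; rewrite /x' (negbTE n1).
    have -> : (e == de u) || (e == de w) = false.
      by apply/negbTE; apply: contraNN nNe => /orP[] /eqP ->; rewrite !inE eqxx.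
    by [].
  have := subset_leq_card sub; move: Hm; rewrite (cardsD1 (ce u w) (cedges x)).
  have -> : ce u w \in cedges x by rewrite -E0 inE ie0 nN0 x0.
  by rewrite add1n ltnS => H1 H2; exact: leq_trans H2 H1.
have [Rs' He'] := IH x' Hm' Hinv'.
apply: (merge_step (x := x) uw He' (fun e _ => Hxx e)) _ _ Hsub.
- rewrite /x' [de u == _]eq_sym (negbTE (ce_de u)) eqxx /= lerDr; apply: x_ge0; exact: de_edge.
- rewrite /x' [de w == _]eq_sym (negbTE (ce_de w)) eqxx orbT /= lerDr; apply: x_ge0; exact: de_edge.
Qed.


End Exist.

Section Round.
Variable R : realType.

Lemma floor_diff_ge (a b : R) (K : int) : K%:~R <= a - b -> K <= Num.floor a - Num.floor b.
Proof.
move=> H; rewrite lerBrDr floor_ge_int intrD.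
have := floor_le b; lra.
Qed.

Lemma floor_diff_le (a b : R) (K : int) : a - b <= K%:~R -> Num.floor a - Num.floor b <= K.
Proof.
move=> H; rewrite lerBlDr -ltzD1 floor_lt_int !intrD.
have := floorD1_gt b; rewrite intrD; lra.
Qed.

Definition thr (a : R) : R := (Num.ceil a)%:~R - a.

Lemma thr_itv a : (0 <= thr a) && (thr a < 1).
Proof.
rewrite /thr; have := ceil_itv a; rewrite intrB => /andP[h1 h2].
apply/andP; split; lra.
Qed.

Lemma floor_shift (a t : R) : (0 <= t) && (t < 1) ->
  (Num.floor (a + t))%:~R = (Num.ceil a)%:~R - ((t < thr a)%R)%:R :> R.
Proof.
move=> /andP[t0 t1]; have := ceil_itv a; rewrite intrB => /andP[h1 h2].
rewrite /thr; case: ltP => tl /=.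
  rewrite (@floor_def _ _ (Num.ceil a - 1)); first by rewrite intrB.
  rewrite subrK intrB; apply/andP; split; lra.
rewrite (@floor_def _ _ (Num.ceil a)); first by rewrite subr0.
rewrite intrD; apply/andP; split; lra.
Qed.

Variable B : seq R.
Hypothesis Bsorted : sorted <%R B.
Hypothesis Bitv : forall t, t \in B -> (0 <= t) && (t < 1).
Hypothesis B0 : 0 \in B.

Definition tB (j : nat) : R := nth 1 B j.
Definition lamB (j : nat) : R := tB j.+1 - tB j.

Lemma tB_lt j k : (j < k)%N -> (k <= size B)%N -> tB j < tB k.
Proof.
move=> jk kB; rewrite /tB.
case: (ltngtP k (size B)) jk kB => // [kB jk _|-> jk _].
  apply: (sorted_ltn_nth lt_trans) => //; rewrite inE //; exact: ltn_trans jk kB.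
rewrite [nth 1 B (size B)]nth_default //.
by have /andP[] := Bitv (mem_nth 1 jk).
Qed.

Lemma tB_le j k : (j <= k)%N -> (k <= size B)%N -> tB j <= tB k.
Proof.
by move=> jk kB; case: (ltngtP j k) jk => // [jk _|-> _]; [exact/ltW/tB_lt|].
Qed.

Lemma tB0 : tB 0 = 0.
Proof.
have iB : (index 0%R B < size B)%N by rewrite index_mem.
have E : tB (index 0%R B) = 0 by rewrite /tB nth_index.
case: (posnP (index 0%R B)) => [i0|ip]; first by rewrite -E i0.
have := tB_lt ip (ltnW iB); rewrite E.
have /andP[h _] := Bitv (mem_nth 1 (ltn_trans ip iB)).
rewrite /tB in h *; lra.
Qed.

Lemma tBsize : tB (size B) = 1.
Proof. by rewrite /tB nth_default. Qed.

Lemma lamB_ge0 j : (j < size B)%N -> 0 <= lamB j.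
Proof. by move=> jB; rewrite /lamB subr_ge0; apply: tB_le. Qed.

Lemma lamB_sum : \sum_(j < size B) lamB j = 1.
Proof.
rewrite -(big_mkord xpredT lamB) /lamB telescope_sumr // tBsize tB0; ring.
Qed.

Lemma lamB_avg (a : R) : thr a \in B ->
  \sum_(j < size B) lamB j * (Num.floor (a + tB j))%:~R = a.
Proof.
move=> ta; set k := index (thr a) B.
have kB : (k < size B)%N by rewrite index_mem.
have tk : tB k = thr a by rewrite /tB nth_index.
rewrite -(big_mkord xpredT (fun j => lamB j * (Num.floor (a + tB j))%:~R)).
rewrite (eq_big_nat _ _ (F2 := fun j => (Num.ceil a)%:~R * lamB j - lamB j * (j < k)%N%:R)); last first.
  move=> j /andP[_ jB]; rewrite floor_shift; last by apply: Bitv; apply: mem_nth.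
  rewrite -tk.
  have -> : (tB j < tB k) = (j < k)%N.
    case: (ltnP j k) => jk; first exact: tB_lt (ltnW kB).
    by apply/negbTE; rewrite -leNgt; apply: tB_le => //; exact: ltnW.
  ring.
rewrite sumrB -mulr_sumr.
have -> : \sum_(0 <= i < size B) lamB i = 1 by rewrite -lamB_sum (big_mkord xpredT lamB).
rewrite (big_cat_nat _ (n := k)) //=; last exact: ltnW.
rewrite (eq_big_nat _ _ (F2 := lamB)); last by move=> j /andP[_ jk]; rewrite jk mulr1.
rewrite [\sum_(k <= i < size B) _]big1_seq; last first.
  by move=> j /andP[_]; rewrite mem_index_iota => /andP[kj _]; rewrite ltnNge kj mulr0.
rewrite /lamB telescope_sumr // tB0 tk /thr; ring.
Qed.

End Round.

Section Rnd.
Variables (R : realType) (n N : nat).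

Definition Pre (y : 'I_n -> R) (L : seq 'I_n) i := \sum_(v <- take i L) y v.
Definition zr (y : 'I_n -> R) (L : seq 'I_n) (t : R) v : R :=
  (Num.floor (Pre y L (index v L).+1 + t) - Num.floor (Pre y L (index v L) + t))%:~R.

Lemma sum_index (T : eqType) (t : seq T) (F : nat -> R) : uniq t ->
  \sum_(v <- t) F (index v t) = \sum_(0 <= k < size t) F k.
Proof.
elim: t F => [|a t IH] F; first by rewrite big_nil big_geq.
move=> /andP[ant ut]; rewrite big_cons /= eqxx big_nat_recl //.
congr (_ + _); rewrite -(IH (fun k => F k.+1)) // big_seq [RHS]big_seq.
apply: eq_bigr => v vt; case: eqP => // E; by rewrite E vt in ant.
Qed.

Lemma index_in_cat (L U s W : seq 'I_n) v : uniq L -> L = U ++ s ++ W -> v \in s ->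
  index v L = (size U + index v s)%N.
Proof.
move=> uL E vs; rewrite E index_cat.
have -> : (v \in U) = false.
  apply/negbTE; move: uL; rewrite E cat_uniq => /and3P[_ H _].
  by apply: contra H => vU; apply/hasP; exists v => //; rewrite mem_cat vs.
by rewrite index_cat vs.
Qed.

Lemma seg_round (y : 'I_n -> R) L t U s W : uniq L -> L = U ++ s ++ W ->
  \sum_(v <- s) zr y L t v =
    (Num.floor (Pre y L (size U + size s) + t))%:~R - (Num.floor (Pre y L (size U) + t))%:~R
  /\ \sum_(v <- s) y v = Pre y L (size U + size s) - Pre y L (size U).
Proof.
move=> uL E; split; last first.
  have T1 : take (size U + size s) L = U ++ s by rewrite E catA take_size_cat ?size_cat.
  have T2 : take (size U) L = U by rewrite E take_size_cat.
  rewrite /Pre T1 T2 big_cat /=; ring.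
have us : uniq s by move: uL; rewrite E !cat_uniq => /and3P[_ _ /andP[]].
pose G := fun k => (Num.floor (Pre y L (size U + k.+1) + t))%:~R -
    (Num.floor (Pre y L (size U + k) + t))%:~R : R.
rewrite big_seq (eq_bigr (fun v => G (index v s))); last first.
  by move=> v vs; rewrite /zr /G (index_in_cat uL E vs) intrB addnS.
rewrite -big_seq (sum_index G) // /G.
rewrite (telescope_sumr (fun k => (Num.floor (Pre y L (size U + k) + t))%:~R : R)) //.
by rewrite addn0.
Qed.

Lemma L_split (L : seq 'I_n) v : v \in L ->
  L = take (index v L) L ++ [:: v] ++ drop (index v L).+1 L.
Proof.
move=> vL; rewrite /= -{1}(cat_take_drop (index v L) L) (drop_nth v) ?index_mem //.
by rewrite nth_index.
Qed.

Lemma sum_set_list (t : seq 'I_n) (F : 'I_n -> R) : uniq t ->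
  \sum_(v in [set v in t]) F v = \sum_(v <- t) F v.
Proof.
by move=> ut; rewrite big_uniq //; apply: eq_bigl => v; rewrite inE.
Qed.

Lemma card_set_list (t : seq 'I_n) : uniq t -> #|[set v in t]| = size t.
Proof. by move=> ut; rewrite cardsE; apply/card_uniqP. Qed.

Lemma mem_split (T : eqType) (x : T) s : x \in s -> exists s1 s2, s = s1 ++ x :: s2.
Proof. by case/splitPr => s1 s2; exists s1, s2. Qed.

Lemma route_in_flatten (Rs : seq (seq 'I_n)) r u t w : r \in Rs -> r = u ++ t ++ w ->
  exists U W, flatten Rs = U ++ t ++ W.
Proof.
move=> rin E; have [A [B' ->]] := mem_split rin.
by exists (flatten A ++ u), (w ++ flatten B'); rewrite flatten_cat /= E !catA.
Qed.

Lemma SRI_seg (x : {set vertex n} -> R) Rs r u t w (C : rat) (d : 'I_N -> 'I_n -> rat) xi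
    (z : 'I_n -> R) :
  encodes x Rs -> r \in Rs -> r = u ++ t ++ w -> t != [::] ->
  kS R C d xi [set v in t] + x_E x [set v in t] - #|[set v in t]|%:R <= \sum_(v in [set v in t]) z v ->
  kS R C d xi [set v in t] - 1 <= \sum_(v <- t) z v.
Proof.
move=> He rin E tn H.
have [_ uf _ _] := He.
have ur : uniq r := uniq_flatten_mem rin uf.
have ut : uniq t by move: ur; rewrite E !cat_uniq => /and3P[_ _ /andP[]].
have := L1 He rin E tn; rewrite card_set_list // sum_set_list // in H.
lra.
Qed.

Lemma segK (C : rat) (d : 'I_N -> 'I_n -> rat) xi (z : 'I_n -> R) t : 0 < C -> uniq t ->
  kS R C d xi [set v in t] - 1 <= \sum_(v <- t) z v ->
  \sum_(v <- t) (ratr (d xi v) : R) <= ratr C * (1 + \sum_(v <- t) z v).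
Proof.
move=> C0 ut H; rewrite -[\sum_(v <- t) (ratr (d xi v) : R)](sum_set_list _ ut).
have H1 := K1 R d xi [set v in t] C0.
have C0' : 0 <= (ratr C : R) by rewrite ler0q ltW.
have H2 : ratr C * kS R C d xi [set v in t] <= ratr C * (1 + \sum_(v <- t) z v).
  by apply: ler_wpM2l => //; lra.
exact: le_trans H1 H2.
Qed.

End Rnd.

Unset Implicit Arguments. Set Strict Implicit. Set Printing Implicit Defensive.

Theorem theorem3 (R : realType) (n N : nat)
  (C : rat) (d : 'I_N -> 'I_n -> rat) (p : 'I_N -> rat) (ch : Xchoice)
  (HC : 0 < C)
  (Hd : forall xi v, 0 <= d xi v <= C)
  (Hp : forall xi, 0 <= p xi)
  (Hp1 : \sum_(xi < N) p xi = 1)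
  (Hk : match ch with Xcvrp k => (0 < k)%N | Xsub => True end)
  (b : 'I_n -> nat)
  (xbar : {set vertex n} -> R)
  (HX : in_X C d p ch xbar)
  (Hint : integral_on_edges xbar) :
  forall y : 'I_N -> 'I_n -> R,
    in_SRI C d b xbar y <-> conv (fun z => in_Pi C d xbar z /\ in_box b z) y.
Proof.
have Hsub : in_X_sub xbar.
  by case: ch HX {Hk} => [|k] HX; [exact: HX | case: HX].
have Inv0 : Inv xbar.
  case: Hsub => Hb Hdeg Hs; split => // e ie.
  have [z Ez] := Hint e ie; have /andP[h0 h2] := Hb e ie.
  rewrite Ez in h0 h2 *; case: z {Ez} h0 h2 => [k|k] h0 h2.
    by exists k => //; rewrite -(ler_nat R).
  by move: h0; rewrite NegzE mulrNz oppr_ge0 lern0.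
have [Rs0 He0] := enc_exists (leqnn _) Inv0.
have He0' := He0; case: He0' => allp0 uf0 cov0 Hx0.
pose dd := fun xi v => (ratr (d xi v) : R).
have toPi : forall z : 'I_N -> 'I_n -> R,
    (forall xi v, is_intR (z xi v) /\ 0 <= z xi v) ->
    (forall xi r, r \in Rs0 -> seg (ratr C) (z xi) (dd xi) r) -> in_Pi C d xbar z.
  move=> z Hz Hseg Rs He r rin xi.
  have [_ uf _ _] := He.
  have ur : uniq r := uniq_flatten_mem rin uf.
  apply: Y_suff.
  - exact: ltW.
  - by move=> v; case/andP: (Hd xi v).
  - exact: Hz xi.
  - exact: ur.
  move=> u t w E tn.
  have ut : uniq t by move: ur; rewrite E !cat_uniq => /and3P[_ _ /andP[]].
  apply: segK => //.
  apply: (SRI_seg He rin E tn).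
  exact: (L4 HC He0 (Hseg xi) (fun v => (Hz xi v).1)).
have fromPi : forall z, in_Pi C d xbar z ->
    (forall xi v, is_intR (z xi v)) /\
    (forall xi r, r \in Rs0 -> seg (ratr C) (z xi) (dd xi) r).
  move=> z Hz; split.
    move=> xi v; have [r rin vr] : exists2 r, r \in Rs0 & v \in r by apply/flattenP; exact: cov0.
    by have [H _] := Hz Rs0 He0 r rin xi; exact: (H v).1.
  move=> xi r rin; exact: Y_nec (Hz Rs0 He0 r rin xi).
move=> y; split.
- move=> [Hbox HSRI].
  set L := flatten Rs0.
  pose Ps := [seq Pre (y xi) L i | xi <- enum 'I_N, i <- iota 0 (size L).+1].
  pose B := sort <=%R (undup (0 :: map (@thr R) Ps)).
  have Bsorted : sorted <%R B by rewrite sort_lt_sorted undup_uniq.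
  have Bitv : forall t, t \in B -> (0 <= t) && (t < 1).
    move=> t; rewrite mem_sort mem_undup inE => /orP[/eqP->|/mapP[a _ ->]].
      by rewrite lexx ltr01.
    exact: thr_itv.
  have B0 : 0 \in B by rewrite mem_sort mem_undup inE eqxx.
  have thrB : forall xi i, (i <= size L)%N -> thr (Pre (y xi) L i) \in B.
    move=> xi i iL; rewrite mem_sort mem_undup inE; apply/orP; right; apply: map_f.
    by apply: allpairs_f; rewrite ?mem_enum // mem_iota add0n ltnS iL.
  have yPre : forall xi v, y xi v =
      Pre (y xi) L (index v L).+1 - Pre (y xi) L (index v L).
    move=> xi v; have vL : v \in L := cov0 v.
    have [_ S2] := seg_round (y xi) 0 uf0 (L_split vL).
    by rewrite big_seq1 size_take index_mem vL addn1 in S2.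
  exists (size B), (fun j => lamB B j), (fun j xi v => zr (y xi) L (tB B j) v); split.
  + move=> j; split; first exact: (@lamB_ge0 R B Bsorted Bitv j (ltn_ord j)).
    set th := tB B j.
    have zbox : forall xi v, is_intR (zr (y xi) L th v) /\
        (0 <= zr (y xi) L th v) && (zr (y xi) L th v <= (b v)%:R).
      move=> xi v; split; first by rewrite /zr; eexists.
      have vL : v \in L := cov0 v.
      have /andP[y0 yb] := Hbox xi v; rewrite yPre in y0 yb.
      rewrite /zr; apply/andP; split.
        rewrite ler0z; apply: floor_diff_ge; rewrite mulr0z; lra.
      rewrite -[(b v)%:R]/((b v)%:Z%:~R) ler_int; apply: floor_diff_le.
      rewrite -[((b v)%:Z)%:~R]/((b v)%:R : R); lra.
    split; last by move=> xi v; exact: (zbox xi v).2.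
    apply: toPi; first by move=> xi v; have [H1 /andP[H2 _]] := zbox xi v.
    move=> xi r rin u t w E tn.
    have ur : uniq r := uniq_flatten_mem rin uf0.
    have ut : uniq t by move: ur; rewrite E !cat_uniq => /and3P[_ _ /andP[]].
    apply: segK => //.
    have [U [W EL]] := route_in_flatten rin E.
    have [S1 S2] := seg_round (y xi) th uf0 EL.
    rewrite S1.
    have Tn : [set v in t] != set0.
      by case: t tn {E ut EL S1 S2} => // a t _; apply/set0Pn; exists a; rewrite inE mem_head.
    have Hy := SRI_seg He0 rin E tn (HSRI [set v in t] xi Tn).
    rewrite S2 /kS /ceilR in Hy *.
    set c := Num.ceil _ in Hy *.
    set f1 := Num.floor _; set f0 := Num.floor _.
    have : c - 1 <= f1 - f0.
      apply: floor_diff_ge; rewrite intrB; lra.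
    rewrite -(ler_int R) !intrB; lra.
  + exact: (@lamB_sum R B Bsorted Bitv B0).
  + move=> xi v; rewrite yPre /zr.
    have iL : (index v L < size L)%N by rewrite index_mem; exact: cov0.
    rewrite (eq_bigr (fun j : 'I_(size B) => lamB B j * (Num.floor (Pre (y xi) L (index v L).+1 + tB B j))%:~R -
       lamB B j * (Num.floor (Pre (y xi) L (index v L) + tB B j))%:~R)); last first.
      by move=> j _; rewrite intrB mulrBr.
    rewrite sumrB !(@lamB_avg R B Bsorted Bitv B0) //; apply: thrB => //; exact: ltnW.
- move=> [m [lam [pts [Hj Hsum Hy]]]]; split.
  + move=> xi v; rewrite Hy; apply/andP; split.
      apply: sumr_ge0 => j _; have [l0 [_ Hb]] := Hj j; have /andP[h _] := Hb xi v.
      exact: mulr_ge0.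
    have : \sum_(j < m) lam j * pts j xi v <= \sum_(j < m) lam j * (b v)%:R.
      apply: ler_sum => j _; have [l0 [_ Hb]] := Hj j; have /andP[_ h] := Hb xi v.
      exact: ler_wpM2l.
    by rewrite -mulr_suml Hsum mul1r.
  + move=> S xi Sn.
    under eq_bigr do rewrite Hy.
    rewrite exchange_big /=.
    have H : forall j, kS R C d xi S + x_E xbar S - #|S|%:R <= \sum_(v in S) pts j xi v.
      move=> j; have [_ [HPi _]] := Hj j; have [Hi Hs] := fromPi _ HPi.
      exact: (L4 HC He0 (Hs xi) (Hi xi)).
    set Q := kS R C d xi S + x_E xbar S - #|S|%:R.
    have -> : Q = (\sum_(j < m) lam j) * Q by rewrite Hsum mul1r.
    rewrite mulr_suml; apply: ler_sum => j _.
    rewrite -mulr_sumr; apply: ler_wpM2l; [by have [] := Hj j | exact: H].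
Qed.
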